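(* Let $g(x)=e^{-5x^2}$, $s_1=1.5$, $s_2=-1.5$, $\Phi_0(x)=x^2$, and let $\psi_1(x)=\widetilde\psi(2x)$, where $\widetilde\psi(x)=e^{-x^2/(1-x^2)}$ for $|x|<1$ and $\widetilde\psi(x)=0$ otherwise. For $\varepsilon>0$ and $y>0$ define $$u^\varepsilon(x,y)=g(x-s_1-y)\,e^{i\Phi_0(x-y)/\varepsilon}+g(x-s_2+y)\,e^{i\Phi_0(x+y)/\varepsilon},$$ which is the value at time $T=1$ of the exact solution of the one-dimensional wave equation $u_{tt}=y^2u_{xx}$ with initial data $u(0,x)=(g(x-s_1)+g(x-s_2))e^{i\Phi_0(x)/\varepsilon}$ and $u_t(0,x)=-y\big(g'(x-s_1)+\tfrac{i\Phi_0'(x)}{\varepsilon}g(x-s_1)\big)e^{i\Phi_0(x)/\varepsilon}+y\big(g'(x-s_2)+\tfrac{i\Phi_0'(x)}{\varepsilon}g(x-s_2)\big)e^{i\Phi_0(x)/\varepsilon}$. Define $$\mathcal Q^\varepsilon_1(y)=\int_{\mathbb R}|u^\varepsilon(x,y)|^2\,\psi_1(x)\,dx .$$ Then for every compact interval $[a,b]\subset(0,\infty)$ and every integer $k\ge 0$ there is a constant $C_k$, independent of $\varepsilon\in(0,1]$, such that $$\sup_{y\in[a,b]}\left|\frac{d^k}{dy^k}\mathcal Q^\varepsilon_1(y)\right|\le C_k\qquad\text{for all }\varepsilon\in(0,1].$$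
   Context: Here $\varepsilon$ is a small positive parameter representing the wavelength; $\psi_1$ is a smooth compactly supported real-valued function on $\mathbb R$. The point of the statement is that the bound on all $y$-derivatives of the quadratic quantity $\mathcal Q_1^\varepsilon$ is uniform in $\varepsilon$, even though $u^\varepsilon$ itself oscillates on scale $\varepsilon$ in both $x$ and $y$. *)

(* Defs.v *)
From Stdlib Require Import Reals Lra ClassicalEpsilon.
Open Scope R_scope.

(* Total Riemann integral on [a,b]: the Riemann integral if f is Riemann
   integrable there (value independent of the integrability proof), else 0. *)
Definition RInt (f : R -> R) (a b : R) : R :=
  match excluded_middle_informative (exists _ : Riemann_integrable f a b, True) with
  | left H => RiemannInt (proj1_sig (constructive_indefinite_description _ H))
  | right _ => 0
  end.

(* Total derivative: the derivative f'(x) if f is differentiable at x, else 0.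
   The theorem separately asserts differentiability, so the default is never used. *)
Definition Deriv (f : R -> R) (x : R) : R :=
  match excluded_middle_informative (exists l, derivable_pt_lim f x l) with
  | left H => proj1_sig (constructive_indefinite_description _ H)
  | right _ => 0
  end.

Fixpoint Dn (k : nat) (f : R -> R) : R -> R :=
  match k with
  | O => f
  | S k' => Deriv (Dn k' f)
  end.

Definition g (x : R) : R := exp (- 5 * x ^ 2).
Definition s1 : R := 3 / 2.
Definition s2 : R := - (3 / 2).
Definition Phi0 (x : R) : R := x ^ 2.

Definition psi_tilde (x : R) : R :=
  if Rlt_dec (Rabs x) 1 then exp (- (x ^ 2) / (1 - x ^ 2)) else 0.
Definition psi1 (x : R) : R := psi_tilde (2 * x).

(* u^eps(x,y) = g(x-s1-y) e^{i Phi0(x-y)/eps} + g(x-s2+y) e^{i Phi0(x+y)/eps},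
   given by its real and imaginary parts (no complex type in Stdlib). *)
Definition u_re (eps x y : R) : R :=
  g (x - s1 - y) * cos (Phi0 (x - y) / eps) + g (x - s2 + y) * cos (Phi0 (x + y) / eps).
Definition u_im (eps x y : R) : R :=
  g (x - s1 - y) * sin (Phi0 (x - y) / eps) + g (x - s2 + y) * sin (Phi0 (x + y) / eps).

Definition u_abs2 (eps x y : R) : R := u_re eps x y ^ 2 + u_im eps x y ^ 2.

(* Q_1^eps(y) = int_R |u^eps(x,y)|^2 psi1(x) dx.  Since psi1 vanishes outside
   (-1/2,1/2), the integral over R equals the integral over [-1,1]. *)
Definition Q1 (eps y : R) : R := RInt (fun x => u_abs2 eps x y * psi1 x) (-1) 1.

(* Main.v *)
Require Import Defs.
From Stdlib Require Import Reals Lra Lia ClassicalEpsilon FunctionalExtensionality.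
From Coquelicot Require Import Coquelicot.
Open Scope R_scope.

Lemma D_eq f x l l' : derivable_pt_lim f x l -> l = l' -> derivable_pt_lim f x l'.
Proof. intros H ->; exact H. Qed.

Lemma D_const c x : derivable_pt_lim (fun _ => c) x 0.
Proof. exact (derivable_pt_lim_const c x). Qed.
Lemma D_id x : derivable_pt_lim (fun t => t) x 1.
Proof. exact (derivable_pt_lim_id x). Qed.
Lemma D_plus f g x a b : derivable_pt_lim f x a -> derivable_pt_lim g x b ->
  derivable_pt_lim (fun t => f t + g t) x (a + b).
Proof. intros; exact (derivable_pt_lim_plus f g x a b H H0). Qed.
Lemma D_mult f g x a b : derivable_pt_lim f x a -> derivable_pt_lim g x b ->
  derivable_pt_lim (fun t => f t * g t) x (a * g x + f x * b).
Proof. intros; exact (derivable_pt_lim_mult f g x a b H H0). Qed.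
Lemma D_comp f g x a b : derivable_pt_lim f x a -> derivable_pt_lim g (f x) b ->
  derivable_pt_lim (fun t => g (f t)) x (b * a).
Proof. intros; exact (derivable_pt_lim_comp f g x a b H H0). Qed.
Lemma D_exp f x a : derivable_pt_lim f x a -> derivable_pt_lim (fun t => exp (f t)) x (exp (f x) * a).
Proof. intros H; apply (D_comp f exp); auto; apply derivable_pt_lim_exp. Qed.
Lemma D_cos f x a : derivable_pt_lim f x a -> derivable_pt_lim (fun t => cos (f t)) x (- sin (f x) * a).
Proof. intros H; apply (D_comp f cos); auto; apply derivable_pt_lim_cos. Qed.
Lemma D_sin f x a : derivable_pt_lim f x a -> derivable_pt_lim (fun t => sin (f t)) x (cos (f x) * a).
Proof. intros H; apply (D_comp f sin); auto; apply derivable_pt_lim_sin. Qed.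
Lemma D_inv f x a : derivable_pt_lim f x a -> f x <> 0 ->
  derivable_pt_lim (fun t => / f t) x (- a / (f x)^2).
Proof.
  intros H Hf. apply is_derive_Reals in H. apply is_derive_Reals.
  apply is_derive_inv; auto.
Qed.

Lemma dpl_local f g x l d : 0 < d -> (forall z, Rabs (z - x) < d -> f z = g z) ->
  derivable_pt_lim f x l -> derivable_pt_lim g x l.
Proof.
  intros Hd Heq H e He. destruct (H e He) as [d' Hd'].
  assert (Hm: 0 < Rmin d d') by (apply Rmin_pos; [lra|apply cond_pos]).
  exists (mkposreal _ Hm). intros h Hh0 Hh. simpl in Hh.
  rewrite <- (Heq (x+h)), <- (Heq x).
  - apply Hd'; auto. apply Rlt_le_trans with (1:=Hh), Rmin_r.
  - rewrite Rminus_diag, Rabs_R0; lra.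
  - replace (x+h-x) with h by ring. apply Rlt_le_trans with (1:=Hh), Rmin_l.
Qed.

Lemma Deriv_eq f x l : derivable_pt_lim f x l -> Deriv f x = l.
Proof.
  intros H. unfold Deriv. destruct excluded_middle_informative as [e|n].
  - destruct constructive_indefinite_description as [l' H']. simpl.
    eapply uniqueness_limite; eauto.
  - exfalso; apply n; eauto.
Qed.
Inductive pexp := PC (c:R) | PX | PAdd (p q:pexp) | PMul (p q:pexp).
Fixpoint peval (p : pexp) (x : R) : R :=
  match p with PC c => c | PX => x | PAdd p q => peval p x + peval q x
  | PMul p q => peval p x * peval q x end.
Fixpoint pdx (p : pexp) : pexp :=
  match p with PC _ => PC 0 | PX => PC 1 | PAdd p q => PAdd (pdx p) (pdx q)
  | PMul p q => PAdd (PMul (pdx p) q) (PMul p (pdx q)) end.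

Lemma pderiv p x : derivable_pt_lim (fun t => peval p t) x (peval (pdx p) x).
Proof.
  induction p; simpl. apply D_const. apply D_id. apply D_plus; auto.
  apply D_mult; auto.
Qed.

Lemma pbound p : exists M, forall x, Rabs x <= 1 -> Rabs (peval p x) <= M.
Proof.
  induction p; simpl.
  - exists (Rabs c); intros; lra.
  - exists 1; auto.
  - destruct IHp1 as [M1 H1], IHp2 as [M2 H2]. exists (M1+M2); intros.
    eapply Rle_trans. apply Rabs_triang. specialize (H1 x H); specialize (H2 x H); lra.
  - destruct IHp1 as [M1 H1], IHp2 as [M2 H2]. exists (M1*M2); intros.
    rewrite Rabs_mult. apply Rmult_le_compat; auto using Rabs_pos.
Qed.

Definition qf (x : R) := 1 - (2*x)^2.
Definition Qp := PAdd (PC 1) (PMul (PC (-4)) (PMul PX PX)).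
Definition step (P : pexp) (m : nat) : pexp :=
  PAdd (PMul (pdx P) (PMul Qp Qp))
   (PAdd (PMul (PC (8*INR m)) (PMul PX (PMul Qp P))) (PMul (PC (-8)) (PMul PX P))).
Definition GG (P : pexp) (m : nat) (x : R) : R :=
  peval P x * (/ qf x)^m * exp (-(2*x)^2 / qf x).
Definition FF (P : pexp) (m : nat) (x : R) : R :=
  if Rlt_dec (Rabs (2*x)) 1 then GG P m x else 0.

Lemma D_powr f x a m : derivable_pt_lim f x a -> f x <> 0 ->
  derivable_pt_lim (fun t => f t ^ m) x (INR m * a * f x ^ m / f x).
Proof.
  intros H Hf. induction m.
  - simpl. eapply D_eq. apply D_const. field; auto.
  - rewrite S_INR. eapply D_eq. apply (D_mult f (fun t => f t ^ m)); eauto. simpl. field; auto.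
Qed.

Lemma GG_deriv P m x : qf x <> 0 -> derivable_pt_lim (GG P m) x (GG (step P m) (m+2) x).
Proof.
  intros Hq. unfold GG.
  assert (Hi: derivable_pt_lim (fun t => / qf t) x (8*x/(qf x)^2)).
  { apply is_derive_Reals. unfold qf in *. auto_derive; auto. field. auto. }
  assert (Ha: derivable_pt_lim (fun t => -(2*t)^2 / qf t) x (-8*x/(qf x)^2)).
  { apply is_derive_Reals. unfold qf in *. auto_derive; auto. field; auto. }
  assert (Hr := D_powr _ _ _ m Hi (Rinv_neq_0_compat _ Hq)).
  eapply D_eq. apply D_mult. apply D_mult. apply pderiv. exact Hr. apply D_exp. exact Ha.
  unfold step, Qp. simpl peval. rewrite pow_add.
  replace (1 + -4 * (x*x)) with (qf x) by (unfold qf; ring).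
  field; auto.
Qed.

Lemma exp_mul n t : exp (INR n * t) = exp t ^ n.
Proof.
  induction n. simpl. rewrite Rmult_0_l, exp_0; auto.
  rewrite S_INR. replace ((INR n + 1) * t) with (t + INR n * t) by ring.
  rewrite exp_plus, IHn. simpl; ring.
Qed.

Lemma exp_ge_id u : 0 <= u -> u <= exp u.
Proof.
  intros H. destruct (Req_dec u 0). subst. rewrite exp_0; lra.
  pose proof (exp_ineq1 u H0); lra.
Qed.

Lemma exp_pow_ge t N : 0 <= t -> (0 < N)%nat -> (t / INR N)^N <= exp t.
Proof.
  intros Ht HN. assert (HN': 0 < INR N) by (apply lt_0_INR; auto).
  replace t with (INR N * (t / INR N)) at 2 by (field; lra).
  rewrite exp_mul. apply pow_incr. split.
  apply Rdiv_le_0_compat; lra. apply exp_ge_id. apply Rdiv_le_0_compat; lra.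
Qed.

Lemma key_bound m q : 0 < q -> (/q)^m * exp (- / q) <= INR (m+2) ^ (m+2) * q^2.
Proof.
  intros Hq. set (N := (m+2)%nat).
  assert (HN: 0 < INR N) by (apply lt_0_INR; unfold N; lia).
  assert (HE := exp_pow_ge (/q) N (Rlt_le _ _ (Rinv_0_lt_compat _ Hq)) ltac:(unfold N; lia)).
  assert (Hp: 0 < exp (/q)) by apply exp_pos.
  apply Rmult_le_reg_r with (exp (/q)); auto.
  rewrite Rmult_assoc, <- exp_plus, Rplus_opp_l, exp_0, Rmult_1_r.
  apply Rle_trans with (INR N ^ N * q ^ 2 * (/ q / INR N) ^ N).
  2:{ apply Rmult_le_compat_l; auto. apply Rmult_le_pos. apply pow_le; lra. apply pow2_ge_0. }
  unfold Rdiv. rewrite Rpow_mult_distr.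
  replace (INR N ^ N * q ^ 2 * ((/ q) ^ N * (/ INR N) ^ N))
   with ((INR N * / INR N) ^ N * (q ^ 2 * (/ q) ^ N)) by (rewrite Rpow_mult_distr; ring).
  rewrite Rinv_r, pow1 by lra. unfold N. rewrite pow_add. right. field. lra.
Qed.

Lemma FF_boundary P m x0 : Rabs (2*x0) = 1 -> derivable_pt_lim (FF P m) x0 0.
Proof.
  intros H0. destruct (pbound P) as [MP HMP].
  set (K := INR (m+2) ^ (m+2)).
  assert (HK: 0 < K) by (apply pow_lt; apply lt_0_INR; lia).
  set (C := (Rabs MP + 1) * exp 1 * K * 36).
  assert (HC: 0 < C). { unfold C. pose proof (Rabs_pos MP). pose proof (exp_pos 1).
    apply Rmult_lt_0_compat; [|lra]. apply Rmult_lt_0_compat; auto. apply Rmult_lt_0_compat; lra. }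
  intros e He.
  assert (Hd: 0 < Rmin (1/2) (e / C)) by (apply Rmin_pos; [lra| apply Rdiv_lt_0_compat; lra]).
  exists (mkposreal _ Hd). intros h Hh0 Hh. simpl in Hh.
  assert (Hh1: Rabs h < 1/2) by (eapply Rlt_le_trans; [exact Hh| apply Rmin_l]).
  assert (Hh2: Rabs h < e / C) by (eapply Rlt_le_trans; [exact Hh| apply Rmin_r]).
  assert (F0: FF P m x0 = 0). { unfold FF. destruct Rlt_dec; auto. lra. }
  rewrite F0. unfold FF. destruct Rlt_dec as [Hin|Hout].
  2:{ replace ((0 - 0) / h - 0) with 0 by (field; auto). rewrite Rabs_R0; lra. }
  unfold GG. set (x := x0 + h) in *.
  assert (Hx2 : (2*x0)^2 = 1). { rewrite <- pow2_abs, H0; ring. }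
  assert (Hq: 0 < qf x). { unfold qf. rewrite <- pow2_abs.
     pose proof (Rabs_pos (2*x)). nra. }
  assert (Hq2: qf x ^ 2 <= 36 * h^2).
  { assert (Hb: Rabs (2*x0 + h) <= 3/2).
    { eapply Rle_trans. apply Rabs_triang. lra. }
    assert (Hb2: (2*x0+h)^2 <= 9/4).
    { rewrite <- pow2_abs. replace (9/4) with ((3/2)^2) by field.
      apply pow_incr. split; auto using Rabs_pos. }
    replace (qf x) with (- 4 * h * (2*x0+h)) by (unfold qf, x; nra).
    replace ((-4*h*(2*x0+h))^2) with (16 * h^2 * (2*x0+h)^2) by ring.
    pose proof (pow2_ge_0 h). nra. }
  assert (HE: exp (- (2*x)^2 / qf x) = exp 1 * exp (- / qf x)).
  { rewrite <- exp_plus. f_equal. unfold qf in *. field. lra. }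
  rewrite HE.
  assert (Hxx: Rabs x <= 1).
  { unfold x. eapply Rle_trans. apply Rabs_triang.
    assert (Rabs x0 = 1/2). { rewrite Rabs_mult, Rabs_right in H0 by lra. lra. } lra. }
  specialize (HMP x Hxx).
  assert (HKb := key_bound m (qf x) Hq). fold K in HKb.
  assert (Hr: 0 <= (/ qf x)^m) by (apply pow_le; left; apply Rinv_0_lt_compat; auto).
  assert (Habs: Rabs (peval P x * (/ qf x) ^ m * (exp 1 * exp (- / qf x))) <= C * h^2).
  { rewrite !Rabs_mult, (Rabs_right ((/ qf x)^m)) by lra.
    rewrite (Rabs_right (exp 1)) by (left; apply exp_pos).
    rewrite (Rabs_right (exp (- / qf x))) by (left; apply exp_pos).
    replace (Rabs (peval P x) * (/ qf x) ^ m * (exp 1 * exp (- / qf x)))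
     with (Rabs (peval P x) * exp 1 * ((/ qf x) ^ m * exp (- / qf x))) by ring.
    unfold C. pose proof (exp_pos 1). pose proof (Rabs_pos (peval P x)).
    apply Rle_trans with (Rabs (peval P x) * exp 1 * (K * qf x ^ 2)).
    apply Rmult_le_compat_l; auto. apply Rmult_le_pos; lra.
    assert (Rabs (peval P x) <= Rabs MP + 1). { pose proof (Rle_abs MP). lra. }
    pose proof (pow2_ge_0 (qf x)).
    apply Rle_trans with ((Rabs MP + 1) * exp 1 * (K * (36 * h^2))).
    apply Rmult_le_compat. apply Rmult_le_pos; lra. apply Rmult_le_pos; lra.
    apply Rmult_le_compat_r; lra. apply Rmult_le_compat_l; lra. right; ring. }
  replace ((peval P x * (/ qf x) ^ m * (exp 1 * exp (- / qf x)) - 0) / h - 0)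
    with ((peval P x * (/ qf x) ^ m * (exp 1 * exp (- / qf x))) / h) by (field; auto).
  unfold Rdiv. rewrite Rabs_mult, Rabs_inv.
  assert (Hah: 0 < Rabs h) by (apply Rabs_pos_lt; auto).
  apply Rmult_lt_reg_r with (Rabs h); auto. rewrite Rmult_assoc, Rinv_l, Rmult_1_r by lra.
  eapply Rle_lt_trans. exact Habs. rewrite <- pow2_abs.
  replace (C * Rabs h ^ 2) with (C * Rabs h * Rabs h) by ring.
  apply Rmult_lt_compat_r; auto.
  apply Rmult_lt_reg_l with (/C). apply Rinv_0_lt_compat; auto.
  rewrite <- Rmult_assoc, Rinv_l, Rmult_1_l by lra. rewrite Rmult_comm. exact Hh2.
Qed.
Lemma FF_deriv P m x : derivable_pt_lim (FF P m) x (FF (step P m) (m+2) x).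
Proof.
  destruct (Rtotal_order (Rabs (2*x)) 1) as [Hl|[He|Hg]].
  - assert (Hd: 0 < (1 - Rabs (2*x))/2) by lra.
    apply (dpl_local (GG P m) _ _ _ _ Hd).
    + intros z Hz. unfold FF. destruct Rlt_dec as [_|n]; auto. exfalso; apply n.
      replace (2*z) with (2*x + 2*(z-x)) by ring.
      eapply Rle_lt_trans. apply Rabs_triang. rewrite (Rabs_mult 2 (z-x)), (Rabs_right 2) by lra. lra.
    + replace (FF (step P m) (m+2) x) with (GG (step P m) (m+2) x)
        by (unfold FF; destruct Rlt_dec; [auto|lra]). apply GG_deriv.
      unfold qf. rewrite <- pow2_abs. pose proof (Rabs_pos (2*x)). nra.
  - replace (FF (step P m) (m+2) x) with 0
        by (unfold FF; destruct Rlt_dec; [lra|auto]). apply FF_boundary; auto.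
  - assert (Hd: 0 < (Rabs (2*x) - 1)/2) by lra.
    apply (dpl_local (fun _ => 0) _ _ _ _ Hd).
    + intros z Hz. unfold FF. destruct Rlt_dec as [r|_]; auto. exfalso.
      assert (Rabs (2*x) <= Rabs (2*z) + Rabs (2*x - 2*z)).
      { replace (2*x) with (2*z + (2*x - 2*z)) at 1 by ring. apply Rabs_triang. }
      replace (2*x - 2*z) with (-(2*(z-x))) in H by ring.
      rewrite Rabs_Ropp, (Rabs_mult 2 (z-x)), (Rabs_right 2) in H by lra. lra.
    + replace (FF (step P m) (m+2) x) with 0
        by (unfold FF; destruct Rlt_dec; [lra|auto]). apply D_const.
Qed.

Fixpoint Pseq (n : nat) : pexp := match n with O => PC 1 | S n => step (Pseq n) (2*n) end.
Definition psi (n : nat) (x : R) : R := FF (Pseq n) (2*n) x.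

Lemma psi_deriv n x : derivable_pt_lim (psi n) x (psi (S n) x).
Proof.
  unfold psi. replace (2 * S n)%nat with (2*n + 2)%nat by lia. simpl Pseq. apply FF_deriv.
Qed.

Lemma psi_zero n x : 1 <= Rabs (2*x) -> psi n x = 0.
Proof. intros H. unfold psi, FF. destruct Rlt_dec; auto; lra. Qed.

Lemma psi0_eq x : psi 0 x = psi1 x.
Proof.
  unfold psi, psi1, psi_tilde, FF, GG, qf. simpl. destruct Rlt_dec; auto. ring.
Qed.

Lemma psi_cont n x : continuity_pt (psi n) x.
Proof. apply derivable_continuous_pt. exists (psi (S n) x). apply psi_deriv. Qed.

Lemma psi_bound n : exists M, forall x, Rabs x <= 1 -> Rabs (psi n x) <= M.
Proof.
  destruct (continuity_ab_maj (fun x => Rabs (psi n x)) (-1) 1) as [c [Hc _]]. lra.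
  - intros c _. apply (continuity_pt_comp (psi n) Rabs). apply psi_cont. apply Rcontinuity_abs.
  - exists (Rabs (psi n c)). intros x Hx. apply Hc. apply Rabs_le_between; auto. 
Qed.
Inductive ex := Cst (c:R) | VX | VY | InvY | W | CosW | SinW | Psi (n:nat)
  | Exp (e:ex) | Add (e1 e2:ex) | Mul (e1 e2:ex).

Fixpoint ev (w:R) (e:ex) (x y:R) : R :=
  match e with
  | Cst c => c | VX => x | VY => y | InvY => / y | W => w
  | CosW => cos (w*x*y) | SinW => sin (w*x*y) | Psi n => psi n x
  | Exp a => exp (ev w a x y) | Add a b => ev w a x y + ev w b x y
  | Mul a b => ev w a x y * ev w b x y end.

Fixpoint dx (e : ex) : ex :=
  match e with
  | Cst _ | VY | InvY | W => Cst 0 | VX => Cst 1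
  | CosW => Mul (Cst (-1)) (Mul (Mul W VY) SinW)
  | SinW => Mul (Mul W VY) CosW
  | Psi n => Psi (S n)
  | Exp a => Mul (Exp a) (dx a)
  | Add a b => Add (dx a) (dx b)
  | Mul a b => Add (Mul (dx a) b) (Mul a (dx b)) end.

Fixpoint dy (e : ex) : ex :=
  match e with
  | Cst _ | VX | W | Psi _ => Cst 0 | VY => Cst 1
  | InvY => Mul (Cst (-1)) (Mul InvY InvY)
  | CosW => Mul (Cst (-1)) (Mul (Mul W VX) SinW)
  | SinW => Mul (Mul W VX) CosW
  | Exp a => Mul (Exp a) (dy a)
  | Add a b => Add (dy a) (dy b)
  | Mul a b => Add (Mul (dy a) b) (Mul a (dy b)) end.

Lemma D_lin1 w x y : derivable_pt_lim (fun t => w*t*y) x (w*y).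
Proof. apply is_derive_Reals. auto_derive; auto; ring. Qed.
Lemma D_lin2 w x y : derivable_pt_lim (fun t => w*x*t) y (w*x).
Proof. apply is_derive_Reals. auto_derive; auto; ring. Qed.

Lemma ev_dx w e x y : derivable_pt_lim (fun t => ev w e t y) x (ev w (dx e) x y).
Proof.
  induction e; simpl.
  - apply D_const.
  - apply D_id.
  - apply D_const.
  - apply D_const.
  - apply D_const.
  - eapply D_eq. apply D_cos. apply D_lin1. cbv beta; ring.
  - eapply D_eq. apply D_sin. apply D_lin1. cbv beta; ring.
  - apply psi_deriv.
  - eapply D_eq. apply (D_exp (fun t => ev w e t y)); eauto. cbv beta; ring.
  - apply (D_plus (fun t => ev w e1 t y) (fun t => ev w e2 t y)); auto.
  - apply (D_mult (fun t => ev w e1 t y) (fun t => ev w e2 t y)); auto.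
Qed.

Lemma ev_dy w e x y : 0 < y -> derivable_pt_lim (fun t => ev w e x t) y (ev w (dy e) x y).
Proof.
  intros Hy. induction e; simpl.
  - apply D_const.
  - apply D_const.
  - apply D_id.
  - eapply D_eq. apply D_inv. apply D_id. lra. cbv beta; field. lra.
  - apply D_const.
  - eapply D_eq. apply D_cos. apply D_lin2. cbv beta; ring.
  - eapply D_eq. apply D_sin. apply D_lin2. cbv beta; ring.
  - apply D_const.
  - eapply D_eq. apply (D_exp (fun t => ev w e x t)); eauto. cbv beta; ring.
  - apply (D_plus (fun t => ev w e1 x t) (fun t => ev w e2 x t)); auto.
  - apply (D_mult (fun t => ev w e1 x t) (fun t => ev w e2 x t)); auto.
Qed.

Lemma exp_mono u v : u <= v -> exp u <= exp v.
Proof. intros H. destruct (Rle_lt_or_eq_dec _ _ H). left; apply exp_increasing; auto. subst; lra. Qed.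

Lemma ev_bound w e a b : 0 < a ->
  exists M, forall x y, Rabs x <= 1 -> a <= y <= b -> Rabs (ev w e x y) <= M.
Proof.
  intros Ha. induction e; simpl.
  - exists (Rabs c); intros; lra.
  - exists 1; intros; lra.
  - exists b; intros. rewrite Rabs_right; lra.
  - exists (/a); intros. rewrite Rabs_right. apply Rinv_le_contravar; lra.
    left; apply Rinv_0_lt_compat; lra.
  - exists (Rabs w); intros; lra.
  - exists 1; intros. apply Rabs_le. apply COS_bound.
  - exists 1; intros. apply Rabs_le. apply SIN_bound.
  - destruct (psi_bound n) as [M HM]. exists M; auto.
  - destruct IHe as [M HM]. exists (exp M). intros. rewrite Rabs_right by (left; apply exp_pos).
    apply exp_mono. specialize (HM x y H H0). pose proof (Rle_abs (ev w e x y)). lra.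
  - destruct IHe1 as [M1 H1], IHe2 as [M2 H2]. exists (M1+M2); intros.
    eapply Rle_trans. apply Rabs_triang. specialize (H1 x y H H0); specialize (H2 x y H H0); lra.
  - destruct IHe1 as [M1 H1], IHe2 as [M2 H2]. exists (M1*M2); intros.
    rewrite Rabs_mult. apply Rmult_le_compat; auto using Rabs_pos.
Qed.

Fixpoint pure (e : ex) : bool :=
  match e with W | CosW | SinW => false | Exp a => pure a
  | Add a b | Mul a b => pure a && pure b | _ => true end.

Lemma pure_ev w e x y : pure e = true -> ev w e x y = ev 0 e x y.
Proof.
  induction e; simpl; intros H; try discriminate; auto.
  - rewrite IHe; auto.
  - apply andb_prop in H; destruct H. rewrite IHe1, IHe2; auto.
  - apply andb_prop in H; destruct H. rewrite IHe1, IHe2; auto.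
Qed.

Lemma pure_dx e : pure e = true -> pure (dx e) = true.
Proof.
  induction e; simpl; intros H; try discriminate; auto.
  - rewrite H, IHe; auto.
  - apply andb_prop in H; destruct H. rewrite IHe1, IHe2; auto.
  - apply andb_prop in H; destruct H. rewrite H, H0, IHe1, IHe2; auto.
Qed.

Lemma pure_dy e : pure e = true -> pure (dy e) = true.
Proof.
  induction e; simpl; intros H; try discriminate; auto.
  - rewrite H, IHe; auto.
  - apply andb_prop in H; destruct H. rewrite IHe1, IHe2; auto.
  - apply andb_prop in H; destruct H. rewrite H, H0, IHe1, IHe2; auto.
Qed.
Definition Jint (w:R) (k:ex) (y:R) : R := RInt (fun x => ev w k x y) (-1) 1.

Lemma minusR (a b : R) : minus a b = a - b. Proof. reflexivity. Qed.
Lemma scalR (a b : R) : scal a b = a * b. Proof. reflexivity. Qed.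
Lemma plusR (a b : R) : plus a b = a + b. Proof. reflexivity. Qed.

Lemma ev_cont w k x y : continuous (fun t => ev w k t y) x.
Proof. apply (@ex_derive_continuous R_AbsRing R_NormedModule). exists (ev w (dx k) x y). apply is_derive_Reals, ev_dx. Qed.

Lemma ev_exRInt w k y : ex_RInt (fun x => ev w k x y) (-1) 1.
Proof. apply (@ex_RInt_continuous R_CompleteNormedModule). intros; apply ev_cont. Qed.

Lemma D_minus f g x a b : derivable_pt_lim f x a -> derivable_pt_lim g x b ->
  derivable_pt_lim (fun t => f t - g t) x (a - b).
Proof. intros; exact (derivable_pt_lim_minus f g x a b H H0). Qed.

Lemma lip g g' M u v : (forall t, Rmin u v <= t <= Rmax u v ->
    derivable_pt_lim g t (g' t) /\ Rabs (g' t) <= M) ->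
  Rabs (g v - g u) <= M * Rabs (v - u).
Proof.
  intros H. destruct (Rtotal_order u v) as [Hl|[He|Hg]].
  - destruct (MVT_cor2 g g' u v Hl) as [c [Hc Hc2]].
    { intros c Hc. apply H. rewrite Rmin_left, Rmax_right by lra; auto. }
    rewrite Hc, Rabs_mult. apply Rmult_le_compat_r. apply Rabs_pos. apply H.
    rewrite Rmin_left, Rmax_right; lra.
  - subst. rewrite !Rminus_diag, !Rabs_R0. lra.
  - destruct (MVT_cor2 g g' v u Hg) as [c [Hc Hc2]].
    { intros c Hc. apply H. rewrite Rmin_right, Rmax_left by lra; auto. }
    rewrite Rabs_minus_sym, Hc, Rabs_mult, (Rabs_minus_sym v u).
    apply Rmult_le_compat_r. apply Rabs_pos. apply H.
    rewrite Rmin_right, Rmax_left; lra.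
Qed.

Lemma between_abs u v t y0 r : Rmin u v <= t <= Rmax u v ->
  Rabs (u - y0) <= r -> Rabs (v - y0) <= r -> Rabs (t - y0) <= r.
Proof.
  intros Ht Hu Hv. apply Rabs_le_between in Hu. apply Rabs_le_between in Hv.
  apply Rabs_le_between. unfold Rmin, Rmax in Ht. destruct Rle_dec; lra.
Qed.

Lemma taylor f f1 f2 y0 h M :
  (forall t, Rabs (t - y0) <= Rabs h ->
     derivable_pt_lim f t (f1 t) /\ derivable_pt_lim f1 t (f2 t) /\ Rabs (f2 t) <= M) ->
  Rabs (f (y0+h) - f y0 - h * f1 y0) <= M * h^2.
Proof.
  intros H.
  assert (HM: 0 <= M).
  { destruct (H y0) as [_ [_ Hb]]. rewrite Rminus_diag, Rabs_R0; apply Rabs_pos.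
    pose proof (Rabs_pos (f2 y0)); lra. }
  set (phi := fun t => f t - f y0 - (t - y0) * f1 y0).
  replace (f (y0+h) - f y0 - h * f1 y0) with (phi (y0+h) - phi y0) by (unfold phi; ring).
  replace (M * h^2) with ((M * Rabs h) * Rabs (y0 + h - y0))
    by (replace (y0+h-y0) with h by ring; rewrite <- (pow2_abs h); ring).
  apply (lip phi (fun t => f1 t - f1 y0)).
  intros t Ht.
  assert (Htb: Rabs (t - y0) <= Rabs h).
  { apply (between_abs _ _ _ _ _ Ht). rewrite Rminus_diag, Rabs_R0; apply Rabs_pos.
    replace (y0+h-y0) with h by ring; lra. }
  split.
  - unfold phi. eapply D_eq. apply D_minus. apply D_minus. apply (H t Htb). apply D_const.
    apply (D_mult (fun t => t - y0) (fun _ => f1 y0)). apply D_minus. apply D_id. apply D_const.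
    apply D_const. cbv beta; ring.
  - apply Rle_trans with (M * Rabs (t - y0)).
    + apply (lip f1 f2 M y0 t). intros s Hs.
      assert (Hsb: Rabs (s - y0) <= Rabs h).
      { apply (between_abs _ _ _ _ _ Hs). rewrite Rminus_diag, Rabs_R0; apply Rabs_pos. auto. }
      destruct (H s Hsb) as [_ [A B]]; auto.
    + apply Rmult_le_compat_l; auto.
Qed.

Lemma Jint_deriv w k y0 : 0 < y0 -> derivable_pt_lim (Jint w k) y0 (Jint w (dy k) y0).
Proof.
  intros Hy.
  destruct (ev_bound w (dy (dy k)) (y0/2) (3*y0/2)) as [M2 HM2]. lra.
  set (M := Rabs M2 + 1).
  assert (HM: 0 < M) by (unfold M; pose proof (Rabs_pos M2); lra).
  intros e He.
  assert (Hd: 0 < Rmin (y0/2) (e/(2*M))) by (apply Rmin_pos; [lra|apply Rdiv_lt_0_compat; lra]).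
  exists (mkposreal _ Hd). intros h Hh0 Hh. simpl in Hh.
  assert (Hh1: Rabs h < y0/2) by (eapply Rlt_le_trans; [exact Hh| apply Rmin_l]).
  assert (Hh2: Rabs h < e/(2*M)) by (eapply Rlt_le_trans; [exact Hh| apply Rmin_r]).
  set (g := fun x => (ev w k x (y0+h) - ev w k x y0)/h - ev w (dy k) x y0).
  assert (HI: is_RInt g (-1) 1 ((Jint w k (y0+h) - Jint w k y0)/h - Jint w (dy k) y0)).
  { unfold Jint.
    pose proof (RInt_correct _ _ _ (ev_exRInt w k (y0+h))) as I1.
    pose proof (RInt_correct _ _ _ (ev_exRInt w k y0)) as I2.
    pose proof (RInt_correct _ _ _ (ev_exRInt w (dy k) y0)) as I3.
    pose proof (is_RInt_minus _ _ _ _ _ _ I1 I2) as I4.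
    pose proof (is_RInt_scal _ _ _ (/h) _ I4) as I5.
    pose proof (is_RInt_minus _ _ _ _ _ _ I5 I3) as I6.
    rewrite !minusR, scalR in I6.
    replace ((RInt (fun x => ev w k x (y0 + h)) (-1) 1 - RInt (fun x => ev w k x y0) (-1) 1) / h -
      RInt (fun x => ev w (dy k) x y0) (-1) 1) with
      (/ h * (RInt (fun x => ev w k x (y0 + h)) (-1) 1 - RInt (fun x => ev w k x y0) (-1) 1) -
      RInt (fun x => ev w (dy k) x y0) (-1) 1) by (field; auto).
    eapply is_RInt_ext; [|exact I6]. intros x _. unfold g.
    transitivity (/h * (ev w k x (y0+h) - ev w k x y0) - ev w (dy k) x y0); [reflexivity|].
    assert (E: forall a b c : R, /h*(a-b) - c = (a-b)/h - c) by (intros; field; auto). apply E. }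
  rewrite <- (is_RInt_unique _ _ _ _ HI).
  eapply Rle_lt_trans. apply abs_RInt_le_const with (M := M * Rabs h). lra.
  eexists; exact HI.
  - intros x Hx. unfold g.
    assert (Hxx: Rabs x <= 1) by (apply Rabs_le_between; lra).
    assert (T := taylor (fun t => ev w k x t) (fun t => ev w (dy k) x t)
                  (fun t => ev w (dy (dy k)) x t) y0 h M).
    cbv beta in T.
    assert (T2: Rabs (ev w k x (y0 + h) - ev w k x y0 - h * ev w (dy k) x y0) <= M * h ^ 2).
    { apply T. intros t Ht. apply Rabs_le_between in Ht.
      assert (Hh': -(y0/2) < h < y0/2) by (apply Rabs_lt_between; auto).
      repeat split. apply ev_dy; lra. apply ev_dy; lra.
      eapply Rle_trans. apply HM2; auto; lra. unfold M. pose proof (Rle_abs M2); lra. }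
    replace ((ev w k x (y0 + h) - ev w k x y0) / h - ev w (dy k) x y0)
      with ((ev w k x (y0 + h) - ev w k x y0 - h * ev w (dy k) x y0) / h) by (field; auto).
    unfold Rdiv. rewrite Rabs_mult, Rabs_inv.
    assert (Hah: 0 < Rabs h) by (apply Rabs_pos_lt; auto).
    apply Rmult_le_reg_r with (Rabs h); auto. rewrite Rmult_assoc, Rinv_l, Rmult_1_r by lra.
    rewrite <- pow2_abs in T2. eapply Rle_trans. exact T2. right; ring.
  - replace ((1 - -1) * (M * Rabs h)) with ((2*M) * Rabs h) by ring.
    apply Rmult_lt_reg_l with (/ (2*M)). apply Rinv_0_lt_compat; lra.
    rewrite <- Rmult_assoc, Rinv_l, Rmult_1_l by lra. rewrite Rmult_comm. exact Hh2.
Qed.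
Ltac toR := match goal with |- ?a = ?b => change (@eq R a b) end.

Lemma Jint_dx_zero w k y : ev w k 1 y = 0 -> ev w k (-1) y = 0 ->
  RInt (fun x => ev w (dx k) x y) (-1) 1 = 0.
Proof.
  intros H1 H2.
  assert (HI: is_RInt (fun x => ev w (dx k) x y) (-1) 1 (minus (ev w k 1 y) (ev w k (-1) y))).
  { apply (@is_RInt_derive R_CompleteNormedModule (fun x => ev w k x y)).
    intros; apply is_derive_Reals, ev_dx. intros; apply ev_cont. }
  rewrite (is_RInt_unique _ _ _ _ HI). rewrite H1, H2. rewrite minusR. toR. ring.
Qed.

Definition Van (e : ex) := forall w x y, 1/2 < Rabs x -> 0 < y -> ev w e x y = 0.

Lemma local_zero f x l d : 0 < d -> (forall z, Rabs (z-x) < d -> f z = 0) ->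
  derivable_pt_lim f x l -> l = 0.
Proof.
  intros Hd Hz H. apply (uniqueness_limite f x l 0); auto.
  apply (dpl_local (fun _ => 0) f x 0 d); auto. intros; symmetry; auto. apply D_const.
Qed.

Lemma Van_dx e : Van e -> Van (dx e).
Proof.
  intros H w x y Hx Hy.
  apply (local_zero (fun t => ev w e t y) x _ (Rabs x - 1/2)). lra.
  - intros z Hz. apply H; auto.
    assert (Rabs x <= Rabs z + Rabs (x - z)).
    { replace x with (z + (x - z)) at 1 by ring. apply Rabs_triang. }
    rewrite Rabs_minus_sym in H0. lra.
  - apply ev_dx.
Qed.

Lemma Van_dy e : Van e -> Van (dy e).
Proof.
  intros H w x y Hx Hy.
  apply (local_zero (fun t => ev w e x t) y _ y). lra.
  - intros z Hz. apply H; auto. apply Rabs_lt_between in Hz. lra.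
  - apply ev_dy; auto.
Qed.

Definition DD (e : ex) : ex :=
  Add (dy e) (Mul (Cst (-1)) (Mul InvY (Add e (Mul VX (dx e))))).

Lemma Van_DD e : Van e -> Van (DD e).
Proof.
  intros H w x y Hx Hy. unfold DD. simpl.
  rewrite (Van_dy e H), (Van_dx e H), H; auto. ring.
Qed.

Lemma pure_DD e : pure e = true -> pure (DD e) = true.
Proof. intros H. unfold DD. simpl. rewrite pure_dy, pure_dx, H; auto. Qed.

Lemma RInt_plusR f g a b : ex_RInt f a b -> ex_RInt g a b ->
  RInt (fun x => f x + g x) a b = RInt f a b + RInt g a b.
Proof. intros; exact (RInt_plus f g a b H H0). Qed.

Lemma step_deriv w A B y : 0 < y -> Van B ->
  derivable_pt_lim (Jint w (Add A (Mul B CosW))) y (Jint w (Add (dy A) (Mul (DD B) CosW)) y).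
Proof.
  intros Hy HB. eapply D_eq. apply Jint_deriv; auto.
  set (T := Mul (Mul InvY (Mul VX B)) CosW).
  unfold Jint.
  transitivity (RInt (fun x => ev w (Add (dy A) (Mul (DD B) CosW)) x y + ev w (dx T) x y) (-1) 1).
  - apply RInt_ext. intros x _. toR. unfold T, DD. simpl. field. lra.
  - rewrite RInt_plusR by apply ev_exRInt.
    rewrite Jint_dx_zero. ring.
    + unfold T. simpl. rewrite HB. ring. rewrite Rabs_R1; lra. auto.
    + unfold T. simpl. rewrite HB. ring. rewrite Rabs_left by lra; lra. auto.
Qed.

Lemma Dn_match f d : (forall y, 0 < y -> f y = d 0%nat y) ->
  (forall n y, 0 < y -> derivable_pt_lim (d n) y (d (S n) y)) ->
  forall n y, 0 < y -> Dn n f y = d n y.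
Proof.
  intros H0 HD n. induction n; intros y Hy. simpl; auto.
  simpl. apply Deriv_eq. apply (dpl_local (d n) _ _ _ y); auto.
  intros z Hz. symmetry. apply IHn. apply Rabs_lt_between in Hz. lra.
Qed.
Definition G1 := Exp (Mul (Cst (-5)) (Mul (Add VX (Add (Cst (-s1)) (Mul (Cst (-1)) VY)))
                                            (Add VX (Add (Cst (-s1)) (Mul (Cst (-1)) VY))))).
Definition G2 := Exp (Mul (Cst (-5)) (Mul (Add VX (Add (Cst (-s2)) VY))
                                            (Add VX (Add (Cst (-s2)) VY)))).
Definition A0 := Mul (Psi 0) (Add (Mul G1 G1) (Mul G2 G2)).
Definition B0 := Mul (Cst 2) (Mul (Psi 0) (Mul G1 G2)).
Definition An (n : nat) := Nat.iter n dy A0.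
Definition Bn (n : nat) := Nat.iter n DD B0.
Definition dseq (w : R) (n : nat) (y : R) := Jint w (Add (An n) (Mul (Bn n) CosW)) y.

Lemma Van_B0 : Van B0.
Proof.
  intros w x y Hx Hy. unfold B0. simpl. rewrite psi_zero. ring.
  rewrite Rabs_mult, Rabs_right by lra. lra.
Qed.

Lemma Van_Bn n : Van (Bn n).
Proof. induction n. apply Van_B0. apply (Van_DD (Bn n) IHn). Qed.

Lemma pure_An n : pure (An n) = true.
Proof. induction n. reflexivity. apply (pure_dy (An n) IHn). Qed.
Lemma pure_Bn n : pure (Bn n) = true.
Proof. induction n. reflexivity. apply (pure_DD (Bn n) IHn). Qed.

Lemma dseq_deriv w n y : 0 < y -> derivable_pt_lim (dseq w n) y (dseq w (S n) y).
Proof. intros Hy. unfold dseq. apply step_deriv; auto. apply Van_Bn. Qed.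

Lemma RInt_bridge f : (forall x, -1 <= x <= 1 -> continuity_pt f x) ->
  Defs.RInt f (-1) 1 = RInt f (-1) 1.
Proof.
  intros Hc. assert (pr := continuity_implies_RiemannInt (Rlt_le _ _ (ltac:(lra) : -1 < 1)) Hc).
  unfold Defs.RInt. destruct excluded_middle_informative as [e|n].
  - destruct constructive_indefinite_description as [pr' Hp]. simpl. symmetry; apply RInt_Reals.
  - exfalso; apply n; eauto.
Qed.

Lemma pointwise eps x y : 0 < eps ->
  u_abs2 eps x y * psi1 x = ev (4/eps) (Add A0 (Mul B0 CosW)) x y.
Proof.
  intros He.
  assert (Hg: forall t, exp (-5 * (t*t)) = g t) by (intros; unfold g; f_equal; ring).
  unfold A0, B0, G1, G2. simpl. rewrite !Hg, psi0_eq.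
  replace (x + (- s1 + -1 * y)) with (x - s1 - y) by ring.
  replace (x + (- s2 + y)) with (x - s2 + y) by ring.
  unfold u_abs2, u_re, u_im.
  set (a1 := Phi0 (x - y) / eps). set (a2 := Phi0 (x + y) / eps).
  assert (H: cos (4/eps * x * y) = cos a1 * cos a2 + sin a1 * sin a2).
  { rewrite <- cos_minus. replace (a1 - a2) with (-(4/eps*x*y)).
    rewrite cos_neg; auto. unfold a1, a2, Phi0. field. lra. }
  rewrite H.
  pose proof (sin2_cos2 a1) as H1. pose proof (sin2_cos2 a2) as H2. unfold Rsqr in H1, H2.
  set (g1 := g (x - s1 - y)). set (g2 := g (x - s2 + y)).
  transitivity (psi1 x * (g1*g1*(sin a1 * sin a1 + cos a1 * cos a1) + g2*g2*(sin a2 * sin a2 + cos a2 * cos a2))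
     + 2 * (psi1 x * (g1 * g2)) * (cos a1 * cos a2 + sin a1 * sin a2)).
  ring. rewrite H1, H2. ring.
Qed.

Lemma Q1_eq eps y : 0 < eps -> Q1 eps y = dseq (4/eps) 0 y.
Proof.
  intros He. unfold Q1.
  assert (Hf: (fun x => u_abs2 eps x y * psi1 x) = (fun x => ev (4/eps) (Add A0 (Mul B0 CosW)) x y)).
  { apply functional_extensionality. intros x. apply pointwise; auto. }
  rewrite Hf. rewrite RInt_bridge. reflexivity.
  intros x _. apply derivable_continuous_pt. eexists. apply ev_dx.
Qed.

Theorem mainTheorem1 :
  forall a b : R, 0 < a -> a <= b ->
  forall k : nat, exists C : R,
    forall eps : R, 0 < eps <= 1 ->
    forall y : R, a <= y <= b ->
      derivable_pt_lim (Dn k (Q1 eps)) y (Dn (S k) (Q1 eps) y) /\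
      Rabs (Dn k (Q1 eps) y) <= C.
Proof.
  intros a b Ha Hab k.
  destruct (ev_bound 0 (An k) a b Ha) as [MA HA].
  destruct (ev_bound 0 (Bn k) a b Ha) as [MB HB].
  exists (2*(MA+MB)). intros eps Heps y Hy.
  set (w := 4/eps).
  assert (Heq: forall n y, 0 < y -> Dn n (Q1 eps) y = dseq w n y).
  { apply Dn_match. intros; apply Q1_eq; lra. intros; apply dseq_deriv; auto. }
  split.
  - rewrite (Heq (S k) y) by lra.
    apply (dpl_local (dseq w k) _ _ _ y). lra.
    + intros z Hz. symmetry. apply Heq. apply Rabs_lt_between in Hz. lra.
    + apply dseq_deriv; lra.
  - rewrite Heq by lra. unfold dseq, Jint.
    eapply Rle_trans. apply abs_RInt_le_const with (M := MA+MB). lra. apply ev_exRInt.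
    + intros x Hx. simpl ev. rewrite (pure_ev w (An k)), (pure_ev w (Bn k)) by (apply pure_An || apply pure_Bn).
      assert (Hxx: Rabs x <= 1) by (apply Rabs_le_between; lra).
      specialize (HA x y Hxx Hy). specialize (HB x y Hxx Hy).
      eapply Rle_trans. apply Rabs_triang. rewrite Rabs_mult.
      assert (Rabs (cos (w*x*y)) <= 1) by (apply Rabs_le; apply COS_bound).
      pose proof (Rabs_pos (ev 0 (Bn k) x y)). nra.
    + right; ring.
Qed.
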